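(* Let $S$ be an inverse semigroup that is a mirror semigroup, with semilattice of idempotents $\Sigma=\Sigma(S)$. Then $(S,\leqslant)$ is continuous (resp. algebraic) if and only if $(\Sigma,\leqslant)$ is continuous (resp. algebraic).
   Context: An inverse semigroup is a semigroup $S$ in which every $s$ has a unique $s^*$ with $ss^*s=s$ and $s^*ss^*=s^*$. $\Sigma(S)$ is the set of idempotents. The intrinsic order is $s\leqslant t$ iff $s=t\epsilon$ for some idempotent $\epsilon$. A subset is directed if nonempty and any two elements have an upper bound in it. $S$ is a mirror semigroup if every directed subset of $\Sigma$ having a supremum in $(\Sigma,\leqslant)$ also has a supremum in $(S,\leqslant)$. In a poset, $x$ is way-below $y$ ($x\ll y$) if for every directed subset $D$ that has a supremum with $y\leqslant \sup D$, there is $d\in D$ with $x\leqslant d$. A poset is continuous if for every $s$ the set $\{t : t\ll s\}$ is directed with supremum $s$. An element $k$ is compact if $k\ll k$; a poset is algebraic if every element is the supremum of the directed set of compact elements below it. (The way-below relation, continuity and algebraicity of $\Sigma$ are taken with respect to the poset $(\Sigma,\leqslant)$ itself.) *)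

(* Defs.v *)
Definition inverse_semigroup {S : Type} (mul : S -> S -> S) : Prop :=
  (forall a b c, mul a (mul b c) = mul (mul a b) c) /\
  (forall s, exists! t, mul (mul s t) s = s /\ mul (mul t s) t = t).

Definition idempotent {S : Type} (mul : S -> S -> S) (e : S) : Prop :=
  mul e e = e.

Definition intrinsic_le {S : Type} (mul : S -> S -> S) (s t : S) : Prop :=
  exists e, idempotent mul e /\ s = mul t e.

(* Order-theoretic notions relative to a carrier C (the poset (C, le)). *)
Definition directed {S : Type} (C : S -> Prop) (le : S -> S -> Prop)
  (D : S -> Prop) : Prop :=
  (forall d, D d -> C d) /\ (exists d, D d) /\
  (forall a b, D a -> D b -> exists c, D c /\ le a c /\ le b c).

Definition is_sup {S : Type} (C : S -> Prop) (le : S -> S -> Prop)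
  (D : S -> Prop) (x : S) : Prop :=
  C x /\ (forall d, D d -> le d x) /\
  (forall y, C y -> (forall d, D d -> le d y) -> le x y).

Definition has_sup {S : Type} (C : S -> Prop) (le : S -> S -> Prop)
  (D : S -> Prop) : Prop := exists x, is_sup C le D x.

Definition way_below {S : Type} (C : S -> Prop) (le : S -> S -> Prop)
  (x y : S) : Prop :=
  forall D, directed C le D -> forall s, is_sup C le D s -> le y s ->
    exists d, D d /\ le x d.

Definition continuous_poset {S : Type} (C : S -> Prop) (le : S -> S -> Prop)
  : Prop :=
  forall s, C s ->
    directed C le (fun t => C t /\ way_below C le t s) /\
    is_sup C le (fun t => C t /\ way_below C le t s) s.

Definition compact {S : Type} (C : S -> Prop) (le : S -> S -> Prop) (k : S)
  : Prop := C k /\ way_below C le k k.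

Definition algebraic_poset {S : Type} (C : S -> Prop) (le : S -> S -> Prop)
  : Prop :=
  forall s, C s ->
    directed C le (fun k => compact C le k /\ le k s) /\
    is_sup C le (fun k => compact C le k /\ le k s) s.

Definition mirror {S : Type} (mul : S -> S -> S) : Prop :=
  forall D, directed (idempotent mul) (intrinsic_le mul) D ->
    has_sup (idempotent mul) (intrinsic_le mul) D ->
    has_sup (fun _ => True) (intrinsic_le mul) D.

(* Main.v *)
Require Import Defs.
From Stdlib Require Import IndefiniteDescription.

Definition inv {S : Type} {mul : S -> S -> S} (H : inverse_semigroup mul) (s : S) : S :=
  proj1_sig (constructive_indefinite_description _ (proj2 H s)).

Ltac norm := match goal with
  [ A : forall a b c, ?m a (?m b c) = ?m (?m a b) c |- _ ] => repeat rewrite A end.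
Ltac aeq := norm; reflexivity.

Lemma inv_spec {S} (mul : S -> S -> S) (H : inverse_semigroup mul) s :
  mul (mul s (inv H s)) s = s /\ mul (mul (inv H s) s) (inv H s) = inv H s /\
  (forall t, mul (mul s t) s = s -> mul (mul t s) t = t -> inv H s = t).
Proof.
  unfold inv. destruct (constructive_indefinite_description _ (proj2 H s)) as [t [[h1 h2] h3]].
  simpl. split; [exact h1|split; [exact h2|]]. intros t' a b. apply h3. split; assumption.
Qed.

Lemma idr {S} (mul : S -> S -> S) (H : inverse_semigroup mul) e a :
  idempotent mul e -> mul (mul a e) e = mul a e.
Proof. intro he. pose proof (proj1 H) as A. rewrite <- A. unfold idempotent in he. rewrite he. reflexivity. Qed.

Lemma idem_mul {S} (mul : S -> S -> S) (H : inverse_semigroup mul) e f :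
  idempotent mul e -> idempotent mul f -> idempotent mul (mul e f).
Proof.
  intros he hf. pose proof (proj1 H) as A.
  destruct (inv_spec mul H (mul e f)) as [hx1 [hx2 hu]].
  set (x := inv H (mul e f)) in *.
  assert (hx2' := hx2). rewrite A in hx2'.
  assert (hx1' := hx1). repeat rewrite A in hx1'.
  assert (K : forall a, mul (mul (mul (mul a x) e) f) x = mul a x).
  { intro a. transitivity (mul a (mul (mul (mul x e) f) x)); [aeq| rewrite hx2'; reflexivity]. }
  assert (Hy : x = mul (mul f x) e).
  { apply hu.
    - norm. rewrite (idr mul H f), (idr mul H e) by assumption.
      exact hx1'.
    - norm. rewrite (idr mul H e), (idr mul H f) by assumption.
      rewrite K. reflexivity. }
  assert (Hxx : mul x x = x).
  { assert (T : mul x x = mul (mul (mul f x) e) (mul (mul f x) e)) by (rewrite <- Hy; reflexivity).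
    rewrite T. norm. rewrite K. symmetry; exact Hy. }
  destruct (inv_spec mul H x) as [_ [_ hu']].
  assert (E1 : inv H x = x) by (apply hu'; rewrite Hxx; exact Hxx).
  assert (E2 : inv H x = mul e f) by (apply hu'; assumption).
  unfold idempotent. rewrite <- E2, E1. exact Hxx.
Qed.

Lemma idem_comm {S} (mul : S -> S -> S) (H : inverse_semigroup mul) e f :
  idempotent mul e -> idempotent mul f -> mul e f = mul f e.
Proof.
  intros he hf. pose proof (proj1 H) as A.
  pose proof (idem_mul mul H e f he hf) as hef.
  pose proof (idem_mul mul H f e hf he) as hfe.
  unfold idempotent in hef, hfe.
  destruct (inv_spec mul H (mul e f)) as [_ [_ hu]].
  assert (E1 : inv H (mul e f) = mul e f) by (apply hu; rewrite hef; exact hef).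
  assert (E2 : inv H (mul e f) = mul f e).
  { apply hu.
    - norm. rewrite (idr mul H f), (idr mul H e) by assumption.
      assert (h := hef). repeat rewrite A in h. exact h.
    - norm. rewrite (idr mul H e), (idr mul H f) by assumption.
      assert (h := hfe). repeat rewrite A in h. exact h. }
  rewrite <- E1, E2. reflexivity.
Qed.

Lemma d_idem {S} (mul : S -> S -> S) (H : inverse_semigroup mul) s :
  idempotent mul (mul (inv H s) s).
Proof.
  pose proof (proj1 H) as A. destruct (inv_spec mul H s) as [h1 [h2 _]].
  unfold idempotent. norm. rewrite h2. reflexivity.
Qed.

Lemma sd {S} (mul : S -> S -> S) (H : inverse_semigroup mul) s :
  mul s (mul (inv H s) s) = s.
Proof.
  pose proof (proj1 H) as A. destruct (inv_spec mul H s) as [h1 [h2 _]].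
  rewrite A. exact h1.
Qed.

Lemma r_idem {S} (mul : S -> S -> S) (H : inverse_semigroup mul) s :
  idempotent mul (mul s (inv H s)).
Proof.
  pose proof (proj1 H) as A. destruct (inv_spec mul H s) as [h1 [h2 _]].
  unfold idempotent. norm. rewrite h1. reflexivity.
Qed.

Lemma inv_idem {S} (mul : S -> S -> S) (H : inverse_semigroup mul) e :
  idempotent mul e -> inv H e = e.
Proof.
  intro he. destruct (inv_spec mul H e) as [_ [_ hu]]. unfold idempotent in he.
  apply hu; rewrite he; exact he.
Qed.

Lemma inv_mul_idem {S} (mul : S -> S -> S) (H : inverse_semigroup mul) x e :
  idempotent mul e -> inv H (mul x e) = mul e (inv H x).
Proof.
  intro he. pose proof (proj1 H) as A. destruct (inv_spec mul H x) as [h1 [h2 _]].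
  destruct (inv_spec mul H (mul x e)) as [_ [_ hu]].
  pose proof (d_idem mul H x) as hd.
  set (x' := inv H x) in *.
  apply hu.
  - norm. rewrite (idr mul H e) by assumption.
    transitivity (mul (mul x (mul e (mul x' x))) e); [aeq|].
    rewrite (idem_comm mul H e (mul x' x)) by assumption.
    transitivity (mul (mul (mul (mul x x') x) e) e); [aeq|].
    rewrite h1. apply idr; assumption.
  - norm. rewrite (idr mul H e) by assumption.
    transitivity (mul (mul e (mul (mul x' x) e)) x'); [aeq|].
    rewrite <- (idem_comm mul H e (mul x' x)) by assumption.
    transitivity (mul (mul e e) (mul (mul x' x) x')); [aeq|].
    unfold idempotent in he. rewrite he, h2. reflexivity.
Qed.

Lemma d_mul_idem {S} (mul : S -> S -> S) (H : inverse_semigroup mul) x e :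
  idempotent mul e -> mul (inv H (mul x e)) (mul x e) = mul (mul (inv H x) x) e.
Proof.
  intro he. pose proof (proj1 H) as A. rewrite inv_mul_idem by assumption.
  pose proof (d_idem mul H x) as hd.
  transitivity (mul (mul e (mul (inv H x) x)) e); [aeq|].
  rewrite (idem_comm mul H e) by assumption. apply idr; assumption.
Qed.

Lemma le_refl {S} (mul : S -> S -> S) (H : inverse_semigroup mul) s :
  intrinsic_le mul s s.
Proof. exists (mul (inv H s) s). split; [apply d_idem| symmetry; apply sd]. Qed.

Lemma le_trans {S} (mul : S -> S -> S) (H : inverse_semigroup mul) a b c :
  intrinsic_le mul a b -> intrinsic_le mul b c -> intrinsic_le mul a c.
Proof.
  pose proof (proj1 H) as A.
  intros [e [he ->]] [f [hf ->]]. exists (mul f e). split.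
  - apply idem_mul; assumption.
  - aeq.
Qed.

Lemma le_idem_r {S} (mul : S -> S -> S) s e :
  idempotent mul e -> intrinsic_le mul (mul s e) s.
Proof. intro he. exists e. split; [exact he|reflexivity]. Qed.

Lemma le_down {S} (mul : S -> S -> S) (H : inverse_semigroup mul) u e :
  idempotent mul e -> intrinsic_le mul u e -> idempotent mul u.
Proof. intros he [g [hg ->]]. apply idem_mul; assumption. Qed.

Lemma le_d {S} (mul : S -> S -> S) (H : inverse_semigroup mul) u x :
  intrinsic_le mul u x -> u = mul x (mul (inv H u) u).
Proof.
  pose proof (proj1 H) as A.
  intros [e [he ->]]. rewrite d_mul_idem by assumption. rewrite A, sd. reflexivity.
Qed.

Lemma d_mono {S} (mul : S -> S -> S) (H : inverse_semigroup mul) u x :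
  intrinsic_le mul u x -> intrinsic_le mul (mul (inv H u) u) (mul (inv H x) x).
Proof.
  intros [e [he ->]]. rewrite d_mul_idem by assumption. exists e. split; [exact he|reflexivity].
Qed.

Lemma idem_le_l {S} (mul : S -> S -> S) (H : inverse_semigroup mul) e f :
  idempotent mul f -> intrinsic_le mul e f -> mul f e = e.
Proof.
  pose proof (proj1 H) as A.
  intros hf [g [hg ->]]. rewrite A. unfold idempotent in hf. rewrite hf. reflexivity.
Qed.

Lemma le_left {S} (mul : S -> S -> S) (H : inverse_semigroup mul) e z :
  idempotent mul e -> intrinsic_le mul (mul e z) z.
Proof.
  intro he. pose proof (proj1 H) as A. destruct (inv_spec mul H z) as [h1 [h2 _]].
  pose proof (r_idem mul H z) as hr.
  set (z' := inv H z) in *.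
  exists (mul (mul z' e) z). split.
  - unfold idempotent.
    transitivity (mul (mul z' (mul e (mul z z'))) (mul e z)); [aeq|].
    rewrite (idem_comm mul H e (mul z z')) by assumption.
    transitivity (mul (mul (mul (mul z' z) z') (mul e e)) z); [aeq|].
    rewrite h2. unfold idempotent in he. rewrite he. aeq.
  - transitivity (mul (mul (mul z z') e) z); [|aeq].
    rewrite (idem_comm mul H (mul z z') e) by assumption.
    transitivity (mul e (mul (mul z z') z)); [|aeq]. rewrite h1. reflexivity.
Qed.

Lemma wb_le {S} (C : S -> Prop) (le : S -> S -> Prop) a b :
  (forall x, le x x) -> C b -> way_below C le a b -> le a b.
Proof.
  intros hr hC hw.
  destruct (hw (fun y => y = b)) with (s := b) as [d [-> h]]; auto.
  - split; [intros d ->; exact hC|]. split; [exists b; reflexivity|].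
    intros x y -> ->. exists b. auto.
  - split; [exact hC|]. split; [intros d ->; apply hr|]. intros y _ hy. apply hy. reflexivity.
Qed.

Lemma G1 {S} (C : S -> Prop) (le : S -> S -> Prop) (W P : S -> Prop) s :
  (forall a b c, le a b -> le b c -> le a c) ->
  (forall w, W w -> P w) -> (forall p, P p -> C p) ->
  (forall p, P p -> exists w, W w /\ le p w) ->
  directed C le W -> is_sup C le W s -> directed C le P /\ is_sup C le P s.
Proof.
  intros tr hWP hPC hPW [_ [[w0 hw0] hWd]] [hs [hub hl]].
  split; [split; [exact hPC|split]|].
  - exists w0. auto.
  - intros a b ha hb. destruct (hPW a ha) as [w1 [h1 l1]]. destruct (hPW b hb) as [w2 [h2 l2]].
    destruct (hWd w1 w2 h1 h2) as [c [hc [c1 c2]]]. exists c. split; [auto|].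
    split; eauto.
  - split; [exact hs|split].
    + intros p hp. destruct (hPW p hp) as [w [hw l]]. eauto.
    + intros y hy hb. apply hl; auto.
Qed.

Lemma G2 {S} (C C' : S -> Prop) (le : S -> S -> Prop) (P : S -> Prop) e :
  (forall t, C t -> C' t) -> (forall t, P t -> C t) -> C e ->
  directed C' le P -> is_sup C' le P e -> directed C le P /\ is_sup C le P e.
Proof.
  intros hCC hPC hCe [_ [hne hd]] [_ [hub hl]].
  split; [split; [exact hPC|split; assumption]|].
  split; [exact hCe|split; [exact hub|]]. intros y hy hb. apply hl; auto.
Qed.

Lemma G3 {S} (C : S -> Prop) (le : S -> S -> Prop) (P Q : S -> Prop) e :
  (forall t, P t <-> Q t) ->
  directed C le P -> is_sup C le P e -> directed C le Q /\ is_sup C le Q e.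
Proof.
  intros hPQ [hPC [[w hw] hd]] [hs [hub hl]].
  split; [split; [|split]|split; [exact hs|split]].
  - intros d hdq. apply hPC, hPQ, hdq.
  - exists w. apply hPQ, hw.
  - intros a b ha hb. destruct (hd a b) as [c [hc h]]; try (apply hPQ; assumption).
    exists c. split; [apply hPQ; exact hc| exact h].
  - intros d hdq. apply hub, hPQ, hdq.
  - intros y hy hb. apply hl; [exact hy|]. intros d hd'. apply hb, hPQ, hd'.
Qed.

Lemma sup_core {S} (mul : S -> S -> S) (H : inverse_semigroup mul) (Hm : mirror mul)
  s (F : S -> Prop) :
  directed (idempotent mul) (intrinsic_le mul) F ->
  is_sup (idempotent mul) (intrinsic_le mul) F (mul (inv H s) s) ->
  directed (fun _ => True) (intrinsic_le mul) (fun w => exists f, F f /\ w = mul s f) /\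
  is_sup (fun _ => True) (intrinsic_le mul) (fun w => exists f, F f /\ w = mul s f) s.
Proof.
  pose proof (proj1 H) as A.
  intros HF HsF. pose proof HF as [hFi [[f0 hf0] hFd]].
  pose proof HsF as [hdi [hub hl]].
  split; [split; [auto|split]|split; [exact I|split]].
  - exists (mul s f0). exists f0. auto.
  - intros a b [f1 [h1 ->]] [f2 [h2 ->]].
    destruct (hFd f1 f2 h1 h2) as [f3 [h3 [[g1 [hg1 E1]] [g2 [hg2 E2]]]]].
    exists (mul s f3). split; [exists f3; auto|].
    split; [exists g1 | exists g2]; (split; [assumption|]).
    + rewrite E1. aeq.
    + rewrite E2. aeq.
  - intros w [f [hf ->]]. apply le_idem_r. auto.
  - intros z _ hz.
    set (k := mul (inv H s) z).
    assert (hk : forall f, F f -> intrinsic_le mul f k).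
    { intros f hf. destruct (hz (mul s f)) as [g [hg E]]; [exists f; auto|].
      exists g. split; [exact hg|].
      rewrite <- (idem_le_l mul H f (mul (inv H s) s)) by (auto).
      unfold k. rewrite <- A, E. aeq. }
    destruct (Hm F HF (ex_intro _ _ HsF)) as [x [_ [hxub hxl]]].
    assert (x1 : intrinsic_le mul x (mul (inv H s) s)) by (apply hxl; auto).
    assert (x2 : idempotent mul x) by (eapply le_down; eauto).
    assert (x3 : intrinsic_le mul (mul (inv H s) s) x) by (apply hl; auto).
    assert (x4 : intrinsic_le mul x k) by (apply hxl; auto).
    destruct (le_trans mul H _ _ _ x3 x4) as [h [hh Eh]].
    assert (Es : s = mul (mul (mul s (inv H s)) z) h).
    { rewrite <- (sd mul H s) at 1. rewrite Eh. unfold k. aeq. }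
    rewrite Es. eapply le_trans; [exact H| apply le_idem_r; exact hh|].
    apply le_left; [exact H| apply r_idem].
Qed.

Lemma wbA {S} (mul : S -> S -> S) (H : inverse_semigroup mul) u f :
  way_below (idempotent mul) (intrinsic_le mul) f (mul (inv H u) u) ->
  way_below (fun _ => True) (intrinsic_le mul) (mul u f) u.
Proof.
  pose proof (proj1 H) as A.
  intros hw D [_ [[v0 hv0] hDd]] x [_ [hxub hxl]] hux.
  assert (hfd : intrinsic_le mul f (mul (inv H u) u)).
  { apply (wb_le (idempotent mul)); [apply le_refl; exact H| apply d_idem| exact hw]. }
  set (D' := fun e => exists v, D v /\ e = mul (inv H v) v).
  destruct (hw D') with (s := mul (inv H x) x) as [e [[v [hv ->]] hfe]].
  - split; [intros e [v [_ ->]]; apply d_idem|split].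
    + exists (mul (inv H v0) v0). exists v0. auto.
    + intros a b [v1 [h1 ->]] [v2 [h2 ->]]. destruct (hDd v1 v2 h1 h2) as [c [hc [l1 l2]]].
      exists (mul (inv H c) c). split; [exists c; auto|split; apply d_mono; auto].
  - split; [apply d_idem|split].
    + intros e [v [hv ->]]. apply d_mono; auto.
    + intros y hy hb.
      assert (hxy : intrinsic_le mul x (mul x y)).
      { apply hxl; [exact I|]. intros v hv.
        destruct (hb (mul (inv H v) v)) as [g [hg Eg]]; [exists v; auto|].
        exists g. split; [exact hg|]. rewrite (le_d mul H v x) by auto. rewrite Eg. aeq. }
      destruct hxy as [h [hh Eh]].
      assert (E : mul (inv H x) x = mul y (mul (mul (inv H x) x) h)).
      { transitivity (mul (inv H x) (mul (mul x y) h)); [f_equal; exact Eh|].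
        transitivity (mul (mul (mul (inv H x) x) y) h); [aeq|].
        rewrite <- (idem_comm mul H y (mul (inv H x) x)) by (auto; apply d_idem). aeq. }
      exists (mul (mul (inv H x) x) h). split; [apply idem_mul; [exact H|apply d_idem|exact hh]|].
      exact E.
  - apply d_mono; auto.
  - exists v. split; [exact hv|].
    destruct hfe as [g [hg Eg]].
    assert (Eu : mul u f = mul x f).
    { rewrite (le_d mul H u x) at 1 by exact hux.
      rewrite <- A. rewrite (idem_le_l mul H f (mul (inv H u) u)); auto. apply d_idem. }
    rewrite Eu, Eg. exists g. split; [exact hg|].
    transitivity (mul (mul x (mul (inv H v) v)) g); [aeq| rewrite <- (le_d mul H v x) by auto; reflexivity].
Qed.

Lemma wb_equiv {S} (mul : S -> S -> S) (H : inverse_semigroup mul) (Hm : mirror mul) t e :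
  idempotent mul e ->
  (way_below (fun _ => True) (intrinsic_le mul) t e <->
   idempotent mul t /\ way_below (idempotent mul) (intrinsic_le mul) t e).
Proof.
  intro he. split.
  - intro hw.
    assert (hte : intrinsic_le mul t e) by (apply (wb_le (fun _ => True)); [apply le_refl; exact H|exact I|exact hw]).
    split; [eapply le_down; eauto|].
    intros D HD y Hy hey.
    destruct (Hm D HD (ex_intro _ _ Hy)) as [x [_ [hxub hxl]]].
    destruct Hy as [hyi [hyub hyl]].
    assert (x1 : intrinsic_le mul x y) by (apply hxl; auto).
    assert (x2 : idempotent mul x) by (eapply le_down; eauto).
    assert (x3 : intrinsic_le mul y x) by (apply hyl; auto).
    destruct HD as [_ [hne hd]].
    apply (hw D (conj (fun _ _ => I) (conj hne hd)) x (conj I (conj hxub hxl))).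
    eapply le_trans; eauto.
  - intros [hti hw].
    assert (hte : intrinsic_le mul t e) by (apply (wb_le (idempotent mul)); [apply le_refl; exact H|exact he|exact hw]).
    assert (E : mul e t = t) by (apply (idem_le_l mul H); assumption).
    rewrite <- E. apply (wbA mul H).
    rewrite (inv_idem mul H e he). unfold idempotent in he. rewrite he. exact hw.
Qed.

Theorem theorem5p3 (S : Type) (mul : S -> S -> S)
  (HS : inverse_semigroup mul) (Hm : mirror mul) :
  (continuous_poset (fun _ : S => True) (intrinsic_le mul) <->
   continuous_poset (idempotent mul) (intrinsic_le mul)) /\
  (algebraic_poset (fun _ : S => True) (intrinsic_le mul) <->
   algebraic_poset (idempotent mul) (intrinsic_le mul)).
Proof.
  pose proof (proj1 HS) as A.
  assert (tr : forall a b c, intrinsic_le mul a b -> intrinsic_le mul b c -> intrinsic_le mul a c)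
    by (intros; eapply le_trans; eauto).
  split; split.
  - intros HC e he. destruct (HC e I) as [Hd Hs].
    assert (Eq : forall t, (True /\ way_below (fun _ => True) (intrinsic_le mul) t e) <->
       (idempotent mul t /\ way_below (idempotent mul) (intrinsic_le mul) t e)).
    { intro t. split.
      * intros [_ h]. apply (wb_equiv mul HS Hm t e he); exact h.
      * intro h. split; [exact I|]. apply (wb_equiv mul HS Hm t e he); exact h. }
    destruct (G3 _ _ _ _ _ Eq Hd Hs) as [Hd' Hs'].
    apply (G2 _ (fun _ => True)); auto. intros t [ht _]; exact ht.
  - intros HC s _. destruct (HC _ (d_idem mul HS s)) as [Hd Hs].
    destruct (sup_core mul HS Hm s _ Hd Hs) as [Wd Ws].
    apply (fun h1 h2 h3 => G1 _ _ _ _ _ tr h1 h2 h3 Wd Ws).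
    + intros w [f [[hf1 hf2] ->]]. split; [exact I|]. apply (wbA mul HS); exact hf2.
    + intros; exact I.
    + intros p [_ hp]. destruct (hp _ Wd s Ws (le_refl mul HS s)) as [w [hw l]]. eauto.
  - intros HC e he. destruct (HC e I) as [Hd Hs].
    assert (hk : forall k, intrinsic_le mul k e -> idempotent mul k) by (intros; eapply le_down; eauto).
    assert (Eq : forall k, (compact (fun _ => True) (intrinsic_le mul) k /\ intrinsic_le mul k e) <->
       (compact (idempotent mul) (intrinsic_le mul) k /\ intrinsic_le mul k e)).
    { intro k. split.
      * intros [[_ hw] hle]. split; [|exact hle]. split; [apply hk; exact hle|].
        apply (wb_equiv mul HS Hm k k (hk _ hle)) in hw. apply hw.
      * intros [[hi hw] hle]. split; [|exact hle]. split; [exact I|].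
        apply (wb_equiv mul HS Hm k k hi). auto. }
    destruct (G3 _ _ _ _ _ Eq Hd Hs) as [Hd' Hs'].
    apply (G2 _ (fun _ => True)); auto. intros t [[ht _] _]; exact ht.
  - intros HC s _. destruct (HC _ (d_idem mul HS s)) as [Hd Hs].
    destruct (sup_core mul HS Hm s _ Hd Hs) as [Wd Ws].
    apply (fun h1 h2 h3 => G1 _ _ _ _ _ tr h1 h2 h3 Wd Ws).
    + intros w [f [[[hf1 hf2] hf3] ->]].
      assert (E1 : mul (mul (inv HS s) s) f = f) by (apply (idem_le_l mul HS); [apply d_idem|exact hf3]).
      split; [|apply le_idem_r; exact hf1]. split; [exact I|].
      assert (E2 : mul (mul s f) f = mul s f) by (apply (idr mul HS); exact hf1).
      rewrite <- E2 at 1. apply (wbA mul HS).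
      rewrite (d_mul_idem mul HS s f hf1), E1. exact hf2.
    + intros; exact I.
    + intros p [[_ hp] hps]. destruct (hp _ Wd s Ws hps) as [w [hw l]]. eauto.
Qed.
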